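(* Let $a,\varepsilon\in\mathbb{R}$ and consider the piecewise smooth vector field on $\mathbb{R}^3$ $$Z(x,y,z)=\begin{cases}X_-(x,y,z), & x^2+y^2+z^2\le 1,\\ X_+(x,y,z), & x^2+y^2+z^2\ge 1,\end{cases}$$ with $X_-(x,y,z)=(y,\,-ay+x+az+\varepsilon,\,x)$ and $X_+(x,y,z)=(y,\,-ay-x-az+\varepsilon,\,x)$, with dynamics on the unit sphere $S^2$ given by Filippov's convention. (This is the first-order form, with $x=\dot z$, $y=\ddot z$, of $\dddot{z}+a\ddot{z}+b\dot{z}+abz=\varepsilon$ with $b=\mathrm{sign}(z^2+\dot z^2+\ddot z^2-1)$.) If $$\frac{|a|}{\sqrt{2}}<\varepsilon<|a| \quad\text{or}\quad -|a|<\varepsilon<-\frac{|a|}{\sqrt{2}},$$ then the system admits a pseudo-orbit.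
   Context: Write $h(x,y,z)=x^2+y^2+z^2-1$, so $S^2=h^{-1}(0)$ is the discontinuity surface. Let $\varphi_\pm(t,p)$ denote the flow of the smooth vector field $X_\pm$ (extended to all of $\mathbb{R}^3$) starting at $p$. For a vector field $X$, $Xh(p)=\langle X(p),\nabla h(p)\rangle$; a point $p\in S^2$ with $X_+h(p)=0$ or $X_-h(p)=0$ is a tangency point. A pseudo-orbit (closed pseudo-trajectory) of $Z$ means a closed curve formed by two trajectory arcs meeting $S^2$ in exactly two distinct points $P,Q$: there exist nonzero times $t_-,t_+$ of the same sign with $\varphi_-(t_-,P)=Q$, $\varphi_+(t_+,P)=Q$, such that $\varphi_-(t,P)$ lies in the open unit ball for all $t$ strictly between $0$ and $t_-$, and $\varphi_+(t,P)$ lies outside the closed unit ball for all $t$ strictly between $0$ and $t_+$. *)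

(* Defs.v *)
From Stdlib Require Import Reals Lra.
Open Scope R_scope.

Definition pt := (R * R * R)%type.
Definition px (p : pt) : R := fst (fst p).
Definition py (p : pt) : R := snd (fst p).
Definition pz (p : pt) : R := snd p.

Definition h (p : pt) : R := px p ^ 2 + py p ^ 2 + pz p ^ 2 - 1.

Definition Xminus (a eps : R) (p : pt) : pt :=
  (py p, - a * py p + px p + a * pz p + eps, px p).
Definition Xplus (a eps : R) (p : pt) : pt :=
  (py p, - a * py p - px p - a * pz p + eps, px p).

Definition is_trajectory (X : pt -> pt) (g : R -> pt) : Prop :=
  forall t,
    derivable_pt_lim (fun s => px (g s)) t (px (X (g t))) /\
    derivable_pt_lim (fun s => py (g s)) t (py (X (g t))) /\
    derivable_pt_lim (fun s => pz (g s)) t (pz (X (g t))).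

Definition is_flow_from (X : pt -> pt) (p : pt) (g : R -> pt) : Prop :=
  is_trajectory X g /\ g 0 = p.

Definition strictly_between0 (t s : R) : Prop := (0 < t < s) \/ (s < t < 0).

Definition has_pseudo_orbit (a eps : R) : Prop :=
  exists (P Q : pt) (tm tp : R) (gm gp : R -> pt),
    h P = 0 /\ h Q = 0 /\ P <> Q /\
    tm <> 0 /\ tp <> 0 /\ ((0 < tm /\ 0 < tp) \/ (tm < 0 /\ tp < 0)) /\
    is_flow_from (Xminus a eps) P gm /\ gm tm = Q /\
    is_flow_from (Xplus a eps) P gp /\ gp tp = Q /\
    (forall t, strictly_between0 t tm -> h (gm t) < 0) /\
    (forall t, strictly_between0 t tp -> 0 < h (gp t)).

(* Main.v *)
Require Import Defs.
From Stdlib Require Import Reals Lra Psatz.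
From Coquelicot Require Import Coquelicot.
Open Scope R_scope.

Lemma key (a c sg : R) : sg * sg = 1 -> 0 < c < 1 -> 1 < 2 * c * c ->
  has_pseudo_orbit a (sg * a * c).
Proof.
  intros Hsg Hc H2.
  set (s := sqrt (1 - c * c)).
  assert (Hss : s * s = 1 - c * c) by (apply sqrt_sqrt; nra).
  assert (Hs0 : 0 < s) by (apply sqrt_lt_R0; nra).
  assert (Hcs : s < c) by nra.
  set (k := (c + s) / (c - s)).
  assert (Hk : 1 < k) by (unfold k; apply (Rmult_lt_reg_r (c - s)); [lra|]; field_simplify; lra).
  set (w := fun t => ((c - s) * exp t + (c + s) * exp (- t)) / 2).
  set (w' := fun t => ((c - s) * exp t - (c + s) * exp (- t)) / 2).
  set (al := atan (s / c)).
  assert (Hcal : cos al = c /\ sin al = s).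
  { assert (E : sqrt (1 + (s / c)²) = 1 / c).
    { rewrite <- (sqrt_Rsqr (1 / c)) by (apply Rlt_le, Rdiv_lt_0_compat; lra).
      f_equal. unfold Rsqr. replace (s/c * (s/c)) with ((1 - c*c)/(c*c)) by (rewrite <- Hss; field; lra). field; lra. }
    unfold al; rewrite cos_atan, sin_atan, E; split; field; lra. }
  destruct Hcal as [Hca Hsa].
  assert (Hal : 0 < al < PI / 2).
  { split. unfold al; rewrite <- atan_0; apply atan_increasing; apply Rdiv_lt_0_compat; lra.
    apply atan_bound. }
  exists (sg * - s, sg * c, 0), (sg * s, sg * c, 0), (ln k), (2 * al),
    (fun t => (sg * w' t, sg * w t, sg * (w t - c))),
    (fun t => (sg * (c * sin t - s * cos t), sg * (c * cos t + s * sin t),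
               sg * (c - c * cos t - s * sin t))).
  assert (Hlk : 0 < ln k) by (rewrite <- ln_1; apply ln_increasing; lra).
  assert (Hw0 : w 0 = c) by (unfold w; rewrite Ropp_0, exp_0; field).
  assert (Hw'0 : w' 0 = - s) by (unfold w'; rewrite Ropp_0, exp_0; field).
  assert (Hek : exp (ln k) = k) by (apply exp_ln; lra).
  assert (Hek' : exp (- ln k) = / k) by (rewrite exp_Ropp, Hek; reflexivity).
  assert (HwT : w (ln k) = c) by (unfold w; rewrite Hek, Hek'; unfold k; field; lra).
  assert (Hw'T : w' (ln k) = s) by (unfold w'; rewrite Hek, Hek'; unfold k; field; lra).
  assert (Hinv : forall t, w t * w t - w' t * w' t = 2 * c * c - 1).
  { intro t. unfold w, w'.
    assert (E : exp t * exp (-t) = 1) by (rewrite <- exp_plus; replace (t + -t) with 0 by ring; apply exp_0).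
    nra. }
  repeat split.
  - unfold h, px, py, pz; simpl. nra.
  - unfold h, px, py, pz; simpl. nra.
  - intro E. injection E; intros. nra.
  - lra.
  - lra.
  - left; lra.
  - apply is_derive_Reals; unfold px, py, pz, Xminus, w, w'; simpl.
    auto_derive; [auto|]. unfold px, py, pz; simpl. field.
  - apply is_derive_Reals; unfold px, py, pz, Xminus, w, w'; simpl.
    auto_derive; [auto|]. unfold px, py, pz; simpl. field.
  - apply is_derive_Reals; unfold px, py, pz, Xminus, w, w'; simpl.
    auto_derive; [auto|]. unfold px, py, pz; simpl. field.
  - rewrite Hw0, Hw'0. apply f_equal2; [apply f_equal2|]; ring.
  - rewrite HwT, Hw'T. apply f_equal2; [apply f_equal2|]; ring.
  - apply is_derive_Reals; unfold px, py, pz, Xplus; simpl.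
    auto_derive; [auto|]. unfold px, py, pz; simpl. field.
  - apply is_derive_Reals; unfold px, py, pz, Xplus; simpl.
    auto_derive; [auto|]. unfold px, py, pz; simpl. field.
  - apply is_derive_Reals; unfold px, py, pz, Xplus; simpl.
    auto_derive; [auto|]. unfold px, py, pz; simpl. field.
  - rewrite sin_0, cos_0. apply f_equal2; [apply f_equal2|]; ring.
  - rewrite cos_2a, sin_2a, Hca, Hsa.
    assert (Hcs1 : c * c + s * s = 1) by lra.
    assert (E1 : c * (2 * s * c) - s * (c * c - s * s) = s)
      by (transitivity (s * (c * c + s * s)); [ring | rewrite Hcs1; ring]).
    assert (E2 : c * (c * c - s * s) + s * (2 * s * c) = c)
      by (transitivity (c * (c * c + s * s)); [ring | rewrite Hcs1; ring]).
    assert (E3 : c - c * (c * c - s * s) - s * (2 * s * c) = 0)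
      by (transitivity (c * (1 - (c * c + s * s))); [ring | rewrite Hcs1; ring]).
    rewrite E1, E2, E3. apply f_equal2; [apply f_equal2|]; ring.
  - intros t [[H0 H1]|[H0 H1]]; [|lra].
    assert (Hu1 : 1 < exp t) by (rewrite <- exp_0; apply exp_increasing; lra).
    assert (Hu2 : exp t < k) by (rewrite <- Hek; apply exp_increasing; lra).
    assert (Hkk : k * (c - s) = c + s) by (unfold k; field; lra).
    assert (Hwc : w t < c).
    { unfold w. rewrite exp_Ropp. set (u := exp t) in *.
      assert (0 < (u - 1) * ((c + s) - (c - s) * u)) by (apply Rmult_lt_0_compat; nra).
      apply (Rmult_lt_reg_r (2 * u)); [lra|].
      field_simplify; [|lra]. nra. }
    assert (Hwp : 0 < w t).
    { unfold w. assert (0 < exp t) by apply exp_pos. assert (0 < exp (-t)) by apply exp_pos. nra. }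
    specialize (Hinv t).
    unfold h, px, py, pz; cbn [fst snd].
    replace ((sg * w' t) ^ 2 + (sg * w t) ^ 2 + (sg * (w t - c)) ^ 2 - 1)
      with (sg * sg * (w' t * w' t + w t * w t + (w t - c) * (w t - c)) - 1) by ring.
    rewrite Hsg. nra.
  - intros t [[H0 H1]|[H0 H1]]; [|lra].
    set (u := t / 2).
    assert (Ht : t = 2 * u) by (unfold u; field).
    assert (Hsu : 0 < sin u) by (apply sin_gt_0; unfold u; lra).
    assert (Hsm : 0 < sin (al - u)) by (apply sin_gt_0; unfold u; lra).
    assert (Hsm' : sin (al - u) = s * cos u - c * sin u)
      by (rewrite sin_minus, Hca, Hsa; ring).
    assert (Hz : c - c * cos t - s * sin t = - 2 * sin u * sin (al - u)).
    { rewrite Hsm', Ht, cos_2a, sin_2a. pose proof (sin2_cos2 u). unfold Rsqr in *. nra. }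
    assert (Hxy : (c * sin t - s * cos t) * (c * sin t - s * cos t)
                 + (c * cos t + s * sin t) * (c * cos t + s * sin t) = 1).
    { pose proof (sin2_cos2 t). unfold Rsqr in *. nra. }
    unfold h, px, py, pz; cbn [fst snd].
    replace ((sg * (c * sin t - s * cos t)) ^ 2 + (sg * (c * cos t + s * sin t)) ^ 2 +
             (sg * (c - c * cos t - s * sin t)) ^ 2 - 1)
      with (sg * sg * ((c * sin t - s * cos t) * (c * sin t - s * cos t)
                 + (c * cos t + s * sin t) * (c * cos t + s * sin t)
                 + (c - c * cos t - s * sin t) * (c - c * cos t - s * sin t)) - 1) by ring.
    rewrite Hsg, Hxy, Hz.
    assert (0 < sin u * sin (al - u)) by (apply Rmult_lt_0_compat; lra).
    nra.
Qed.

Theorem theorem1 (a eps : R) :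
  ((Rabs a / sqrt 2 < eps < Rabs a) \/ (- Rabs a < eps < - (Rabs a / sqrt 2))) ->
  has_pseudo_orbit a eps.
Proof.
  intros H.
  assert (Hs2 : sqrt 2 * sqrt 2 = 2) by (apply sqrt_sqrt; lra).
  assert (Hs2p : 0 < sqrt 2) by (apply sqrt_lt_R0; lra).
  assert (Ha0 : 0 <= Rabs a) by apply Rabs_pos.
  assert (Hq : 0 <= Rabs a / sqrt 2) by (apply Rdiv_le_0_compat; lra).
  assert (Hsq : (Rabs a / sqrt 2) * (Rabs a / sqrt 2) = Rabs a * Rabs a / 2)
    by (unfold Rdiv; replace (Rabs a * / sqrt 2 * (Rabs a * / sqrt 2)) with (Rabs a * Rabs a * / (sqrt 2 * sqrt 2)) by (field; lra); rewrite Hs2; reflexivity).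
  assert (Haa : Rabs a * Rabs a = a * a) by (rewrite <- Rabs_mult, Rabs_right; nra).
  assert (HE : a * a < 2 * (eps * eps) /\ eps * eps < a * a /\ a <> 0).
  { destruct H as [[H1 H3]|[H1 H3]]; repeat split; try nra;
      intro; subst; rewrite Rabs_R0 in *; lra. }
  destruct HE as [HE1 [HE2 Ha]].
  set (c := Rabs (eps / a)).
  set (sg := if Rle_dec 0 (eps / a) then 1 else -1).
  assert (Hsg : sg * sg = 1) by (unfold sg; destruct Rle_dec; ring).
  assert (Heq : sg * a * c = eps).
  { unfold sg, c; destruct Rle_dec.
    - rewrite Rabs_right by lra. field; auto.
    - rewrite Rabs_left by lra. field; auto. }
  assert (Hcc : c * c = eps * eps / (a * a))
    by (unfold c; rewrite <- Rabs_mult, Rabs_right; [field; auto| nra]).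
  assert (Haa2 : 0 < a * a) by nra.
  assert (Hc1 : c * c < 1) by (rewrite Hcc; apply (Rmult_lt_reg_r (a * a)); [lra|]; field_simplify; lra).
  assert (Hc2 : 1 < 2 * c * c)
    by (replace (2 * c * c) with (2 * (c * c)) by ring; rewrite Hcc;
        apply (Rmult_lt_reg_r (a * a)); [lra|]; field_simplify; lra).
  assert (Hc0 : 0 <= c) by apply Rabs_pos.
  rewrite <- Heq. apply key; auto. split; nra.
Qed.
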